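(* Fix positive integers $n_x$ and $N_h$, a scalar $\eta>0$, and matrices $A_j, B, C, C_J, L, \Delta A\in\mathbb{R}^{n_x\times n_x}$ with $B$, $C$ and $C_J$ invertible. Define, for $K\in\mathbb{R}^{n_x\times n_x}$, $$\bar q(K,\delta_j)\triangleq \eta\|K\|_F^2+\sum_{i=2}^{n_xN_h}\sigma_i(\kappa^{-1}),\qquad \kappa=F_p(K,\delta_j)F_r(K,\delta_j)^{-1},$$ with $F_p$ and $F_r$ as in the context. Then the function $K\mapsto\bar q(K,\delta_j)$ is strongly convex on $\mathbb{R}^{n_x\times n_x}$.
   Context: Here $\delta_j$ labels one fixed realization of a parametric uncertainty. $A_j$ is the plant system matrix under $\delta_j$, $B$ the input matrix, $C$ the measurement matrix, $C_J$ the performance output matrix, $L$ an observer gain, and $\Delta A$ a given matrix (the uncertainty perturbation of the system matrix). Set $A_{x,j}\triangleq A_j+BKC$ and $A_{e,j}\triangleq A_j-LC$. For $\upsilon\in\{x,e\}$, $F_{\upsilon a}\in\mathbb{R}^{n_xN_h\times n_xN_h}$ is the block lower-triangular matrix whose $(k,l)$ block ($k,l=1,\dots,N_h$, blocks of size $n_x\times n_x$) is $A_{\upsilon,j}^{k-l}B$ for $k\ge l$ and $0$ for $k<l$. Thus $F_{xa}=F_{xa}(K,\delta_j)$ depends on $K$, while $F_{ea}(\delta_j)$ does not. $F_{ex}(\delta_j)$ is the strictly block lower-triangular matrix whose $(k,l)$ block is $A_{e,j}^{k-l-1}\Delta A$ for $k>l$ and $0$ otherwise. Define $$F_p(K,\delta_j)=(I_{N_h}\otimes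 C_J)F_{xa}(K,\delta_j),\qquad F_r(K,\delta_j)=(I_{N_h}\otimes C)\big(F_{ea}(\delta_j)+F_{ex}(\delta_j)F_{xa}(K,\delta_j)\big).$$ $\|K\|_F$ is the Frobenius norm. $\sigma_1(M)\le\dots\le\sigma_{n_xN_h}(M)$ are the singular values of $M$ in nondecreasing order. *)

(* Defs.v *)
From HB Require Import structures.
From mathcomp Require Import all_boot all_order all_algebra.
From Stdlib Require Import ClassicalEpsilon.
Set Implicit Arguments. Unset Strict Implicit. Unset Printing Implicit Defensive.
Import Order.TTheory GRing.Theory Num.Theory.
Local Open Scope ring_scope.

Section Defs.
Variable R : rcfType.

Definition bdim (nx Nh : nat) : nat := (\sum_(k < Nh) nx)%N.

Definition blkmx (nx Nh : nat) (F : 'I_Nh -> 'I_Nh -> 'M[R]_nx) : 'M[R]_(bdim nx Nh) :=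
  @mxblock R Nh Nh (fun _ => nx) (fun _ => nx) F.

Definition kronI (nx Nh : nat) (M : 'M[R]_nx) : 'M[R]_(bdim nx Nh) :=
  blkmx (fun k l => if k == l then M else 0).

Definition Ax nx (A B C K : 'M[R]_nx) : 'M[R]_nx := A + B *m K *m C.
Definition Ae nx (A L C : 'M[R]_nx) : 'M[R]_nx := A - L *m C.

Definition Fa nx Nh (M B : 'M[R]_nx) : 'M[R]_(bdim nx Nh) :=
  blkmx (fun k l => if (l <= k)%N then M ^+ (k - l) *m B else 0).

Definition F_xa nx Nh (A B C K : 'M[R]_nx) := Fa Nh (Ax A B C K) B.
Definition F_ea nx Nh (A B C L : 'M[R]_nx) := Fa Nh (Ae A L C) B.

Definition F_ex nx Nh (A C L dA : 'M[R]_nx) : 'M[R]_(bdim nx Nh) :=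
  blkmx (fun k l => if (l < k)%N then (Ae A L C) ^+ (k - l - 1) *m dA else 0).

Definition F_p nx Nh (A B C CJ K : 'M[R]_nx) : 'M[R]_(bdim nx Nh) :=
  kronI Nh CJ *m F_xa Nh A B C K.

Definition F_r nx Nh (A B C L dA K : 'M[R]_nx) : 'M[R]_(bdim nx Nh) :=
  kronI Nh C *m (F_ea Nh A B C L + F_ex Nh A C L dA *m F_xa Nh A B C K).

(* kappa^{-1} = (F_p F_r^{-1})^{-1} = F_r F_p^{-1} *)
Definition kappa_inv nx Nh (A B C CJ L dA K : 'M[R]_nx) : 'M[R]_(bdim nx Nh) :=
  F_r Nh A B C L dA K *m invmx (F_p Nh A B C CJ K).

(* Singular values of M : 'M_n, in nondecreasing order:
   the nonnegative square roots of the eigenvalues (with multiplicity) of M^T M,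
   i.e. the unique sorted seq s of nonnegative reals of size n with
   char_poly (M^T M) = prod_(x <- s) ('X - x^2). *)
Definition is_sing_vals n (M : 'M[R]_n) (s : seq R) : Prop :=
  [/\ size s = n, sorted <=%R s, all (fun x => 0 <= x) s
    & char_poly (M^T *m M) = \prod_(x <- s) ('X - (x ^+ 2)%:P)].

Definition sing_vals n (M : 'M[R]_n) : seq R :=
  epsilon (inhabits [::]) (is_sing_vals M).

(* sigma_(i+1)(M) in the paper's 1-based numbering *)
Definition sigma n (M : 'M[R]_n) (i : nat) : R := nth 0 (sing_vals M) i.

Definition frob m n (M : 'M[R]_(m, n)) : R :=
  Num.sqrt (\sum_(i < m) \sum_(j < n) M i j ^+ 2).

Definition qbar nx Nh (eta : R) (A B C CJ L dA K : 'M[R]_nx) : R :=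
  eta * frob K ^+ 2
  + \sum_(1 <= i < bdim nx Nh) sigma (kappa_inv Nh A B C CJ L dA K) i.

Definition strongly_convex n (f : 'M[R]_n -> R) : Prop :=
  exists m : R, 0 < m /\
    forall (X Y : 'M[R]_n) (t : R), 0 <= t -> t <= 1 ->
      f (t *: X + (1 - t) *: Y)
        <= t * f X + (1 - t) * f Y - m / 2%:R * t * (1 - t) * frob (X - Y) ^+ 2.

End Defs.

(* Main.v *)
Require Import Defs.
From HB Require Import structures.
From mathcomp Require Import all_boot all_order all_algebra.
From mathcomp Require Import spectral sesquilinear complex.
From mathcomp Require Import ring lra.
From Stdlib Require Import ClassicalEpsilon.
Import Order.TTheory GRing.Theory Num.Theory.
Set Implicit Arguments. Unset Strict Implicit. Unset Printing Implicit Defensive.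
Local Open Scope ring_scope.

Section A.
Variable C : numDomainType.
Lemma kf_arith N (s c : 'I_N -> C) m :
  (forall i, 0 <= s i) -> 0 <= m -> (forall i, m <= s i) ->
  (forall i, c i <= 1) -> \sum_i c i <= N%:R - 1 ->
  \sum_i s i * c i <= \sum_i s i - m.
Proof.
move=> s0 m0 ms c1 sc.
rewrite -subr_ge0.
have e1 : \sum_i s i - m - \sum_i s i * c i = \sum_i s i * (1 - c i) - m.
  rewrite [X in _ = X - m](eq_bigr (fun i => s i - s i * c i)); last by move=> i _; rewrite mulrBr mulr1.
  rewrite sumrB; ring.
have e2 : \sum_(i < N) m * (1 - c i) - m = m * (N%:R - 1 - \sum_i c i).
  rewrite -mulr_sumr sumrB sumr_const card_ord; ring.
rewrite e1; apply: (@le_trans _ _ (\sum_(i < N) m * (1 - c i) - m)).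
  by rewrite e2 mulr_ge0 // subr_ge0.
rewrite lerD2r; apply: ler_sum => i _; apply: ler_wpM2r => //.
by rewrite subr_ge0.
Qed.
End A.

Section KF.
Variable C : numClosedFieldType.
Local Open Scope sesquilinear_scope.

Lemma ctM m n p (A : 'M[C]_(m, n)) (B : 'M[C]_(n, p)) : (A *m B)^t* = B^t* *m A^t*.
Proof. by rewrite trmx_mul map_mxM. Qed.

Lemma ctD m n (A B : 'M[C]_(m, n)) : (A + B)^t* = A^t* + B^t*.
Proof. by rewrite linearD /= map_mxD. Qed.

Lemma ctB m n (A B : 'M[C]_(m, n)) : (A - B)^t* = A^t* - B^t*.
Proof. by rewrite linearB /= map_mxB. Qed.

Lemma ctE m n (A : 'M[C]_(m, n)) i j : A^t* i j = (A j i)^*.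
Proof. by rewrite !mxE. Qed.

Lemma ct_diagE m n (A : 'M[C]_(m, n)) i : (A^t* *m A) i i = \sum_k `|A k i| ^+ 2.
Proof. by rewrite !mxE; apply: eq_bigr => k _; rewrite !mxE normCKC. Qed.

Lemma ct_diagE' m n (A : 'M[C]_(m, n)) i : (A *m A^t*) i i = \sum_k `|A i k| ^+ 2.
Proof. by rewrite !mxE; apply: eq_bigr => k _; rewrite !mxE normCK. Qed.

Lemma ct_diag_ge0 m n (A : 'M[C]_(m, n)) i : 0 <= (A^t* *m A) i i.
Proof. by rewrite ct_diagE sumr_ge0 // => k _; rewrite exprn_ge0. Qed.

Lemma bessel N m (W : 'M[C]_N) (X : 'M[C]_(N, m)) i :
  W *m W^t* *m W = W ->
  (X^t* *m W *m W^t* *m X) i i <= (X^t* *m X) i i.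
Proof.
move=> hW.
set Y := X - W *m W^t* *m X.
have : 0 <= (Y^t* *m Y) i i by apply: ct_diag_ge0.
have E : forall (A B : 'M[C]_m), (A - B) i i = A i i - B i i by move=> A B; rewrite !mxE.
suff -> : Y^t* *m Y = X^t* *m X - X^t* *m W *m W^t* *m X by rewrite E subr_ge0.
rewrite /Y ctB !ctM trmxCK mulmxBl !mulmxBr !mulmxA.
have -> : X^t* *m W *m W^t* *m W *m W^t* *m X = X^t* *m W *m W^t* *m X.
  have -> : X^t* *m W *m W^t* *m W *m W^t* *m X = X^t* *m (W *m W^t* *m W) *m W^t* *m X.
    by rewrite !mulmxA.
  by rewrite hW.
rewrite opprB addrA; congr (_ + _).
by rewrite subrK.
Qed.

Lemma Re_le (a b : C) : 'Re (a * b^*) <= (`|a| ^+ 2 + `|b| ^+ 2) / 2%:R.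
Proof.
rewrite ReE !normCK -subr_ge0.
have -> : (a * a^* + b * b^*) / 2%:R - (a * b^* + (a * b^*)^*) / 2%:R
   = (a - b) * (a - b)^* / 2%:R.
  have -> : (a * b^*)^* = a^* * b by rewrite rmorphM /= conjCK.
  rewrite rmorphB /=.
  set ca := a^*; set cb := b^*; ring.
by apply: divr_ge0; rewrite ?mul_conjC_ge0 ?ler0n.
Qed.


Lemma sum_neq_le N (F : 'I_N -> C) j0 : (forall j, 0 <= F j) ->
  \sum_(j | j != j0) F j <= \sum_j F j.
Proof. by move=> F0; rewrite [X in _ <= X](bigD1 j0) //= ler_wpDl. Qed.

Lemma sum_neq1 N (j0 : 'I_N) : \sum_(j | j != j0) (1 : C) = N%:R - 1.
Proof.
have : \sum_(j < N) (1 : C) = 1 + \sum_(j | j != j0) 1 by rewrite (bigD1 j0).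
by rewrite sumr_const card_ord /= => ->; rewrite [1 + _]addrC addrK.
Qed.

Lemma kf_ub N (U V P Q : 'M[C]_N) (s : 'rV[C]_N) (j0 : 'I_N) (m : C) :
  U *m U^t* *m U = U -> V *m V^t* *m V = V ->
  P *m P^t* *m P = P -> Q *m Q^t* *m Q = Q ->
  (forall i, (U^t* *m U) i i <= 1) -> (forall i, (V^t* *m V) i i <= 1) ->
  (forall i, (P^t* *m P) i i <= 1) -> (forall i, (Q^t* *m Q) i i <= 1) ->
  (forall i, 0 <= s 0 i) -> 0 <= m -> (forall i, m <= s 0 i) ->
  'Re (\sum_(j | j != j0) (U^t* *m (P *m diag_mx s *m Q^t*) *m V) j j)
    <= \sum_i s 0 i - m.
Proof.
move=> hU hV hP hQ dU dV dP dQ s0 m0 ms.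
set A := U^t* *m P; set B := V^t* *m Q.
have eM : U^t* *m (P *m diag_mx s *m Q^t*) *m V = A *m diag_mx s *m B^t*.
  by rewrite /A /B ctM trmxCK !mulmxA.
rewrite eM.
have eE : forall j, (A *m diag_mx s *m B^t*) j j
    = \sum_i s 0 i * (A j i * (B j i)^*).
  move=> j; rewrite mxE; apply: eq_bigr => i _; rewrite mul_mx_diag !mxE.
  by rewrite mulrCA mulrA.
pose w j i := (`|A j i| ^+ 2 + `|B j i| ^+ 2) / 2%:R.
pose c i := \sum_(j | j != j0) w j i.
have w0 : forall j i, 0 <= w j i.
  by move=> j i; rewrite /w divr_ge0 ?ler0n // addr_ge0 // exprn_ge0.
apply: (@le_trans _ _ (\sum_i s 0 i * c i)).
  rewrite raddf_sum.
  apply: (@le_trans _ _ (\sum_(j | j != j0) \sum_i s 0 i * w j i)).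
    apply: ler_sum => j _; rewrite eE raddf_sum; apply: ler_sum => i _.
    change ('Re (s 0 i * (A j i * (B j i)^*)) <= s 0 i * w j i).
    rewrite ReMl; last by apply: ger0_real.
    by apply: ler_wpM2l => //; apply: Re_le.
  rewrite exchange_big /=; rewrite le_eqVlt; apply/orP; left; apply/eqP; apply: eq_bigr => i _.
  by rewrite /c mulr_sumr.
apply: kf_arith => //.
- move=> i; apply: (@le_trans _ _ (\sum_j w j i)); first by apply: sum_neq_le.
  rewrite /w -mulr_suml big_split /= -!ct_diagE.
  have -> : A^t* *m A = P^t* *m U *m U^t* *m P by rewrite /A ctM trmxCK !mulmxA.
  have -> : B^t* *m B = Q^t* *m V *m V^t* *m Q by rewrite /B ctM trmxCK !mulmxA.
  have h1 := @bessel _ _ U P i hU; have h2 := @bessel _ _ V Q i hV.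
  rewrite ler_pdivrMr ?ltr0n // mul1r.
  apply: (@le_trans _ _ (1 + 1)); last by rewrite le_eqVlt; apply/orP; left; apply/eqP; rewrite -mulr2n.
  apply: lerD; [exact: le_trans h1 (dP i) | exact: le_trans h2 (dQ i)].
- rewrite /c exchange_big /= -(sum_neq1 j0); apply: ler_sum => j _.
  rewrite /w -mulr_suml big_split /= -!ct_diagE'.
  have -> : A *m A^t* = U^t* *m P *m P^t* *m U^t*^t* by rewrite /A ctM !mulmxA.
  have -> : B *m B^t* = V^t* *m Q *m Q^t* *m V^t*^t* by rewrite /B ctM !mulmxA.
  rewrite !trmxCK.
  have h1 := @bessel _ _ P U j hP; have h2 := @bessel _ _ Q V j hQ.
  rewrite ler_pdivrMr ?ltr0n // mul1r.
  apply: (@le_trans _ _ (1 + 1)); last by rewrite le_eqVlt; apply/orP; left; apply/eqP; rewrite -mulr2n.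
  by apply: lerD; [exact: le_trans h1 (dU j) | exact: le_trans h2 (dV j)].
Qed.


Lemma kf_eq N (P Q : 'M[C]_N) (s e : 'rV[C]_N) j0 :
  P^t* *m P = diag_mx e -> Q^t* *m Q = 1%:M ->
  (forall i, e 0 i * s 0 i = s 0 i) -> (forall i, 0 <= s 0 i) ->
  'Re (\sum_(j | j != j0) (P^t* *m (P *m diag_mx s *m Q^t*) *m Q) j j)
    = \sum_i s 0 i - s 0 j0.
Proof.
move=> hP hQ es s0.
have -> : P^t* *m (P *m diag_mx s *m Q^t*) *m Q = diag_mx s.
  rewrite !mulmxA hP -(mulmxA _ (Q^t*)) hQ mulmx1 mulmx_diag.
  by congr diag_mx; apply/rowP => i; rewrite !mxE es.
rewrite raddf_sum.
rewrite (eq_bigr (fun j => s 0 j)); last first.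
  move=> j _; rewrite mxE eqxx mulr1n.
  by apply/Creal_ReP; apply: ger0_real.
by rewrite [X in _ = X - _](bigD1 j0) //= addrC addrK.
Qed.

Lemma char_poly_sim n (A P Q : 'M[C]_n) : Q *m P = 1%:M ->
  char_poly (P *m A *m Q) = char_poly A.
Proof.
move=> QP; have PQ := mulmx1C QP.
rewrite /char_poly /char_poly_mx.
set mP := map_mx polyC P; set mQ := map_mx polyC Q.
have mPQ : mP *m mQ = 1%:M by rewrite -map_mxM PQ map_mx1.
have -> : 'X%:M - map_mx polyC (P *m A *m Q)
   = mP *m ('X%:M - map_mx polyC A) *m mQ.
  rewrite !map_mxM mulmxBr mulmxBl -/mP -/mQ; congr (_ - _).
  by rewrite scalar_mxC -mulmxA mPQ mulmx1.
rewrite !det_mulmx mulrC mulrA -det_mulmx.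
by rewrite (mulmx1C mPQ) det1 mul1r.
Qed.


Lemma ct_diag n (v : 'rV[C]_n) : (forall i, v 0 i \is Num.real) ->
  (diag_mx v)^t* = diag_mx v.
Proof.
move=> vr; apply/matrixP => i j; rewrite !mxE eq_sym.
by case: eqP => [->|_]; rewrite ?mulr1n ?mulr0n ?conjC0 // conj_Creal.
Qed.

Lemma inv_cases (x : C) : (x == 0 /\ x^-1 = 0) \/ (x != 0).
Proof. by case: (eqVneq x 0) => [->|nz]; [left; rewrite invr0 | right]. Qed.

Lemma svd_ex N (X : 'M[C]_N) : exists (P Q : 'M[C]_N) (s e : 'rV[C]_N),
  [/\ X = P *m diag_mx s *m Q^t*, P^t* *m P = diag_mx e, P *m P^t* *m P = P,
      Q^t* *m Q = 1%:M & Q *m Q^t* = 1%:M]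
  /\ [/\ forall i, 0 <= s 0 i, forall i, e 0 i * s 0 i = s 0 i,
      forall i, 0 <= e 0 i <= 1
      & char_poly (X^t* *m X) = \prod_i ('X - ((s 0 i) ^+ 2)%:P)].
Proof.
set S := X^t* *m X.
have Sh : S^t* = S by rewrite /S ctM trmxCK.
have Sn : S \is normalmx by rewrite qualifE Sh.
have /orthomx_spectralP eS := Sn.
set Q0 := spectralmx S in eS; set d := spectral_diag S in eS.
have Q0u : Q0 \is unitarymx := spectral_unitarymx S.
have iQ0 : invmx Q0 = Q0^t* by apply: invmx_unitary.
set Q := Q0^t*.
have hQ1 : Q^t* *m Q = 1%:M by rewrite /Q trmxCK; apply/unitarymxP.
have hQ2 : Q *m Q^t* = 1%:M.
  by rewrite /Q trmxCK -iQ0 mulVmx // spectral_unit.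
rewrite iQ0 -/Q in eS.
have eS' : S = Q *m diag_mx d *m Q^t* by rewrite /Q trmxCK.
set Y := X *m Q.
have eY : Y^t* *m Y = diag_mx d.
  rewrite /Y ctM -mulmxA (mulmxA (X^t*)) -/S eS' !mulmxA hQ1 mul1mx.
  by rewrite -mulmxA hQ1 mulmx1.
have dE : forall i, d 0 i = \sum_k `|Y k i| ^+ 2.
  by move=> i; rewrite -ct_diagE eY mxE eqxx mulr1n.
have d0 : forall i, 0 <= d 0 i.
  by move=> i; rewrite dE sumr_ge0 // => k _; rewrite exprn_ge0.
pose s := \row_i sqrtC (d 0 i).
pose t := \row_i (s 0 i)^-1.
pose e := \row_i (s 0 i * (s 0 i)^-1).
have s0 : forall i, 0 <= s 0 i by move=> i; rewrite mxE sqrtC_ge0.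
have s2 : forall i, s 0 i ^+ 2 = d 0 i by move=> i; rewrite mxE sqrtCK.
have t0 : forall i, 0 <= t 0 i by move=> i; rewrite mxE invr_ge0.
have es : forall i, e 0 i * s 0 i = s 0 i.
  move=> i; rewrite mxE; case: (inv_cases (s 0 i)) => [[/eqP -> ->]|nz].
    by rewrite !mul0r.
  by rewrite mulfV // mul1r.
have e01 : forall i, 0 <= e 0 i <= 1.
  move=> i; rewrite mxE; case: (inv_cases (s 0 i)) => [[/eqP -> ->]|nz].
    by rewrite mul0r lexx ler01.
  by rewrite mulfV // ler01 lexx.
have Ye : Y *m diag_mx e = Y.
  apply/matrixP => k i; rewrite mul_mx_diag mxE [e 0 i]mxE.
  case: (inv_cases (s 0 i)) => [[/eqP si _]|nz]; last by rewrite mulfV // mulr1.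
  have : d 0 i = 0 by rewrite -s2 si expr0n.
  rewrite dE => /psumr_eq0P => /(_ (fun k _ => exprn_ge0 2 (normr_ge0 _)) k isT).
  by move/eqP; rewrite expf_eq0 /= normr_eq0 => /eqP ->; rewrite mul0r.
set P := Y *m diag_mx t.
exists P, Q, s, e; split; split => //.
- have -> : P *m diag_mx s = Y.
    rewrite /P -mulmxA mulmx_diag -[RHS]Ye; congr (_ *m diag_mx _).
    by apply/rowP => j; rewrite !mxE mulrC.
  by rewrite /Y -mulmxA hQ2 mulmx1.
- rewrite /P ctM ct_diag; last by move=> i; apply: ger0_real.
  rewrite -mulmxA (mulmxA (Y^t*)) eY !mulmx_diag; congr diag_mx.
  apply/rowP => j; rewrite !mxE; move: (s2 j); rewrite mxE.
  set x := sqrtC (d 0 j) => <-.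
  case: (inv_cases x) => [[/eqP -> ->]|nz]; first by rewrite !mul0r.
  by field.
- rewrite -mulmxA; have -> : P^t* *m P = diag_mx e.
    rewrite /P ctM ct_diag; last by move=> i; apply: ger0_real.
    rewrite -mulmxA (mulmxA (Y^t*)) eY !mulmx_diag; congr diag_mx.
    apply/rowP => j; rewrite !mxE; move: (s2 j); rewrite mxE.
    set x := sqrtC (d 0 j) => <-.
    case: (inv_cases x) => [[/eqP -> ->]|nz]; first by rewrite !mul0r.
    by field.
  rewrite /P -mulmxA mulmx_diag; congr (_ *m diag_mx _).
  apply/rowP => j; rewrite !mxE; set x := sqrtC (d 0 j).
  case: (inv_cases x) => [[/eqP -> ->]|nz]; first by rewrite !mul0r.
  by rewrite mulfV // mulr1.
- rewrite -/S eS' char_poly_sim // char_poly_trig ?diag_mx_is_trig //.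
  by apply: eq_bigr => i _; rewrite mxE eqxx mulr1n s2.
Qed.


Lemma ReD (a b : C) : 'Re (a + b) = 'Re a + 'Re b.
Proof. exact: raddfD. Qed.

Definition svd_data N (X P Q : 'M[C]_N) (s e : 'rV[C]_N) :=
  [/\ X = P *m diag_mx s *m Q^t*, P^t* *m P = diag_mx e, P *m P^t* *m P = P,
      Q^t* *m Q = 1%:M & Q *m Q^t* = 1%:M]
  /\ [/\ forall i, 0 <= s 0 i, forall i, e 0 i * s 0 i = s 0 i
      & forall i, 0 <= e 0 i <= 1].

Lemma svd_piso N (X P Q : 'M[C]_N) s e : svd_data X P Q s e ->
  [/\ P *m P^t* *m P = P, Q *m Q^t* *m Q = Q,
      forall i, (P^t* *m P) i i <= 1 & forall i, (Q^t* *m Q) i i <= 1].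
Proof.
move=> [[_ hP hPP hQ1 hQ2] [_ _ e01]]; split => //.
- by rewrite hQ2 mul1mx.
- by move=> i; rewrite hP mxE eqxx mulr1n; case/andP: (e01 i).
- by move=> i; rewrite hQ1 mxE eqxx mulr1n.
Qed.

Lemma kf_ub_svd N (U V X P Q : 'M[C]_N) s e j0 m :
  svd_data X P Q s e ->
  U *m U^t* *m U = U -> V *m V^t* *m V = V ->
  (forall i, (U^t* *m U) i i <= 1) -> (forall i, (V^t* *m V) i i <= 1) ->
  0 <= m -> (forall i, m <= s 0 i) ->
  'Re (\sum_(j | j != j0) (U^t* *m X *m V) j j) <= \sum_i s 0 i - m.
Proof.
move=> hX hU hV dU dV m0 ms.
have [hP hQ dP dQ] := svd_piso hX.
case: hX => [[eX _ _ _ _] [s0 _ _]].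
by rewrite eX; apply: kf_ub.
Qed.

Lemma kf_conv N (X X1 X2 P Q P1 Q1 P2 Q2 : 'M[C]_N) s e s1 e1 s2 e2 j0 m1 m2 t :
  svd_data X P Q s e -> svd_data X1 P1 Q1 s1 e1 -> svd_data X2 P2 Q2 s2 e2 ->
  0 <= t -> t <= 1 -> X = t *: X1 + (1 - t) *: X2 ->
  0 <= m1 -> (forall i, m1 <= s1 0 i) -> 0 <= m2 -> (forall i, m2 <= s2 0 i) ->
  \sum_i s 0 i - s 0 j0 <=
    t * (\sum_i s1 0 i - m1) + (1 - t) * (\sum_i s2 0 i - m2).
Proof.
move=> hX hX1 hX2 t0 t1 eX m10 m1s m20 m2s.
have [hP hQ dP dQ] := svd_piso hX.
have hX' := hX.
case: hX' => [[eXs ePP _ eQ _] [s0 es _]].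
rewrite -(kf_eq j0 ePP eQ es s0) -eXs.
have -> : P^t* *m X *m Q = t *: (P^t* *m X1 *m Q) + (1 - t) *: (P^t* *m X2 *m Q).
  by rewrite eX mulmxDr mulmxDl; congr (_ + _); rewrite -!mulmxA scalemxAr scalemxAl.
have tr : t \is Num.real by apply: ger0_real.
have t'r : 1 - t \is Num.real by apply: ger0_real; rewrite subr_ge0.
rewrite (eq_bigr (fun j => t * (P^t* *m X1 *m Q) j j + (1 - t) * (P^t* *m X2 *m Q) j j));
  last by move=> j _; rewrite !mxE.
rewrite big_split /= -!mulr_sumr ReD (ReMl tr) (ReMl t'r).
apply: lerD; apply: ler_wpM2l.
- by [].
- exact: (kf_ub_svd j0 hX1 hP hQ dP dQ m10 m1s).
- by rewrite subr_ge0.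
- exact: (kf_ub_svd j0 hX2 hP hQ dP dQ m20 m2s).
Qed.

End KF.

Section SV.
Variable R : rcfType.
Local Notation C := (R[i]).
Local Notation toC := (real_complex R).

Lemma toC_conj (x : R) : (toC x)^* = toC x.
Proof. by apply: conj_Creal; rewrite complex_real. Qed.

Lemma ct_map m n (M : 'M[R]_(m, n)) : ((map_mx toC M)^t*)%sesqui = map_mx toC M^T.
Proof. by apply/matrixP => i j; rewrite !mxE toC_conj. Qed.

Lemma sv_unique n (M : 'M[R]_n) s1 s2 : is_sing_vals M s1 -> is_sing_vals M s2 -> s1 = s2.
Proof.
move=> [_ so1 p1 c1] [_ so2 p2 c2].
have h : perm_eq [seq x ^+ 2 | x <- s1] [seq x ^+ 2 | x <- s2].
  by apply: prod_XsubC_eq; rewrite !big_map -c1 -c2.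
have e : forall s : seq R, all (fun x => 0 <= x) s ->
    s = [seq Num.sqrt y | y <- [seq x ^+ 2 | x <- s]].
  move=> s /allP hs; rewrite -map_comp -[LHS]map_id; apply/eq_in_map => x /hs /= x0.
  by rewrite sqrtr_sqr ger0_norm.
apply: le_sorted_eq => //.
by rewrite (e _ p1) (e _ p2); apply: perm_map.
Qed.


Lemma sv_main n (M : 'M[R]_n) : exists P Q (s e : 'rV[C]_n) (r : 'rV[R]_n),
  [/\ svd_data (map_mx toC M) P Q s e, s = map_mx toC r &
      sing_vals M = sort <=%R [seq r 0 i | i <- enum 'I_n]].
Proof.
have [P [Q [s [e [[h1 h2 h3 h4 h5] [s0 es e01 cp]]]]]] := svd_ex (map_mx toC M).
pose r := \row_i complex.Re (s 0 i).
have sr : forall i, toC (r 0 i) = s 0 i.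
  by move=> i; rewrite mxE RRe_real // ger0_real.
exists P, Q, s, e, r; split; first by split.
  by apply/rowP => i; rewrite mxE sr.
set rl := [seq r 0 i | i <- enum 'I_n].
have hv : is_sing_vals M (sort <=%R rl).
  split.
  - by rewrite size_sort size_map size_enum_ord.
  - by apply: sort_sorted; exact: le_total.
  - rewrite all_sort; apply/allP => x /mapP [i _ ->].
    by rewrite -ler0c sr.
  - apply: (map_poly_inj toC).
    rewrite map_char_poly map_mxM -ct_map cp.
    rewrite (perm_big rl) ?perm_sort // big_map big_enum /= map_prod_XsubC.
    by apply: eq_bigr => i _; congr ('X - _%:P); rewrite rmorphXn /= sr.
rewrite /sing_vals; apply: (sv_unique _ hv).
by apply: epsilon_spec; exists (sort <=%R rl).
Qed.


Lemma G_repr n (M : 'M[R]_n) : (0 < n)%N ->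
  exists P Q (s e : 'rV[C]_n) (r : 'rV[R]_n) (j0 : 'I_n),
  [/\ svd_data (map_mx toC M) P Q s e, s = map_mx toC r,
      \sum_(1 <= i < n) sigma M i = \sum_i r 0 i - r 0 j0,
      0 <= r 0 j0 & forall i, r 0 j0 <= r 0 i].
Proof.
move=> n0.
have [P [Q [s [e [r [hs sr esl]]]]]] := sv_main M.
set rl := [seq r 0 i | i <- enum 'I_n] in esl.
set sl := sort <=%R rl in esl.
have r0 : forall i, 0 <= r 0 i.
  move=> i; have [_ [s0 _ _]] := hs; have := s0 i.
  by rewrite sr mxE ler0c.
have szl : size sl = n by rewrite size_sort size_map size_enum_ord.
have msl : forall x, (x \in sl) = (x \in rl) by move=> x; rewrite mem_sort.
have m_in : nth 0 sl 0 \in rl by rewrite -msl mem_nth // szl.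
have [j0 _ ej0] := mapP m_in.
exists P, Q, s, e, r, j0; split => //.
- rewrite /sigma esl -/sl.
  have : \sum_(0 <= i < n) nth 0 sl i = \sum_i r 0 i.
    rewrite -{1}szl -(big_nth 0 xpredT id) /sl (perm_big rl) ?perm_sort //.
    by rewrite big_map big_enum.
  by rewrite big_ltn // => <-; rewrite -ej0 addrAC subrr add0r.
move=> i; rewrite -ej0.
have key : forall (l : seq R), sorted <=%R l -> forall x, x \in l -> nth 0 l 0 <= x.
  case => [//|m tl] /= so x; rewrite inE => /orP [/eqP -> //|xin].
  by have := order_path_min (@le_trans _ R) so => /allP; apply.
apply: key; first by apply: sort_sorted; exact: le_total.
by rewrite msl; apply: map_f; rewrite mem_enum.
Qed.


Lemma G_conv n (M1 M2 : 'M[R]_n) (t : R) : (0 < n)%N -> 0 <= t -> t <= 1 ->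
  \sum_(1 <= i < n) sigma (t *: M1 + (1 - t) *: M2) i <=
  t * \sum_(1 <= i < n) sigma M1 i + (1 - t) * \sum_(1 <= i < n) sigma M2 i.
Proof.
move=> n0 t0 t1.
have [P [Q [s [e [r [j0 [h sr -> _ _]]]]]]] := G_repr (t *: M1 + (1 - t) *: M2) n0.
have [P1 [Q1 [s1 [e1 [r1 [j1 [h1 sr1 -> m10 m1s]]]]]]] := G_repr M1 n0.
have [P2 [Q2 [s2 [e2 [r2 [j2 [h2 sr2 -> m20 m2s]]]]]]] := G_repr M2 n0.
have E : forall (v : 'rV[R]_n) (w : 'rV[C]_n), w = map_mx toC v ->
    \sum_i w 0 i = toC (\sum_i v 0 i).
  by move=> v w ->; rewrite rmorph_sum; apply: eq_bigr => i _; rewrite mxE.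
have H := @kf_conv _ n _ _ _ _ _ _ _ _ _ s e s1 e1 s2 e2 j0 (toC (r1 0 j1)) (toC (r2 0 j2))
  (toC t) h h1 h2.
have tC0 : 0 <= toC t by rewrite ler0c.
have tC1 : toC t <= 1 by rewrite -(rmorph1 toC) lecR.
have eX : map_mx toC (t *: M1 + (1 - t) *: M2)
    = toC t *: map_mx toC M1 + (1 - toC t) *: map_mx toC M2.
  by rewrite map_mxD !map_mxZ rmorphB rmorph1.
have m10' : 0 <= toC (r1 0 j1) by rewrite ler0c.
have m20' : 0 <= toC (r2 0 j2) by rewrite ler0c.
have m1s' : forall i, toC (r1 0 j1) <= s1 0 i by move=> i; rewrite sr1 mxE lecR.
have m2s' : forall i, toC (r2 0 j2) <= s2 0 i by move=> i; rewrite sr2 mxE lecR.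
have H' := H tC0 tC1 eX m10' m1s' m20' m2s'.
rewrite (E _ _ sr) (E _ _ sr1) (E _ _ sr2) {1}sr mxE in H'.
have TC : forall a b c d f : R, toC (a * (b - c) + (1 - a) * (d - f))
    = toC a * (toC b - toC c) + (1 - toC a) * (toC d - toC f).
  by move=> a b c d f; rewrite !(rmorphD, rmorphM, rmorphN, rmorph1).
by rewrite -lecR TC rmorphB.
Qed.

End SV.

Section Blk.
Variables (R : rcfType) (nx Nh : nat).
Local Notation M := ('M[R]_nx).
Local Notation BM := ('M[R]_(bdim nx Nh)).

Lemma blkmx_mul (F G : 'I_Nh -> 'I_Nh -> M) :
  blkmx F *m blkmx G = blkmx (fun k l => \sum_j F k j *m G j l).
Proof. exact: mul_mxblock. Qed.

Lemma blkmxD (F G : 'I_Nh -> 'I_Nh -> M) :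
  blkmx F + blkmx G = blkmx (fun k l => F k l + G k l).
Proof. by rewrite /blkmx -mxblockD. Qed.

Lemma eq_blkmx (F G : 'I_Nh -> 'I_Nh -> M) :
  (forall k l, F k l = G k l) -> blkmx F = blkmx G.
Proof. by move=> e; apply: eq_mxblock. Qed.

Lemma kronI_mul (A : M) (F : 'I_Nh -> 'I_Nh -> M) :
  kronI Nh A *m blkmx F = blkmx (fun k l => A *m F k l).
Proof.
rewrite /kronI blkmx_mul; apply: eq_blkmx => k l.
rewrite (bigD1 k) //= eqxx big1 ?addr0 // => j /negbTE.
by rewrite eq_sym => ->; rewrite mul0mx.
Qed.

Lemma mul_kronI (A : M) (F : 'I_Nh -> 'I_Nh -> M) :
  blkmx F *m kronI Nh A = blkmx (fun k l => F k l *m A).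
Proof.
rewrite /kronI blkmx_mul; apply: eq_blkmx => k l.
rewrite (bigD1 l) //= eqxx big1 ?addr0 // => j /negbTE.
by move=> ->; rewrite mulmx0.
Qed.

Lemma kronI_mulmx (A B : M) : kronI Nh A *m kronI Nh B = kronI Nh (A *m B).
Proof.
rewrite {1}/kronI kronI_mul /kronI; apply: eq_blkmx => k l.
by case: (k == l); rewrite ?mulmx0.
Qed.

Lemma kronI_scalar (a : R) : kronI Nh (a%:M : M) = a%:M.
Proof.
rewrite -(@mxdiagZ _ _ (fun _ : 'I_Nh => nx) a) /kronI /blkmx /mxdiag.
by apply: eq_mxblock => k l; case: (k == l); rewrite ?conform_mx_id.
Qed.

Lemma kronI1 : kronI Nh (1%:M : M) = 1%:M.
Proof. exact: kronI_scalar. Qed.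

Lemma kronID (A B : M) : kronI Nh (A + B) = kronI Nh A + kronI Nh B.
Proof.
rewrite /kronI blkmxD; apply: eq_blkmx => k l.
by case: (k == l); rewrite ?addr0.
Qed.

Lemma kronIZ (a : R) (A : M) : kronI Nh (a *: A) = a *: kronI Nh A.
Proof.
by rewrite -mul_scalar_mx -kronI_mulmx kronI_scalar mul_scalar_mx.
Qed.

Lemma kronI_unit (A : M) : A \in unitmx ->
  kronI Nh A \in unitmx /\ invmx (kronI Nh A) = kronI Nh (invmx A).
Proof.
move=> uA.
have h : kronI Nh (invmx A) *m kronI Nh A = 1%:M.
  by rewrite kronI_mulmx mulVmx // kronI1.
have [_ u] := mulmx1_unit h; split => //.
by rewrite -[LHS]mul1mx -h -mulmxA mulmxV // mulmx1.
Qed.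


Definition Tm (A : M) : BM :=
  blkmx (fun k l : 'I_Nh => if (l <= k)%N then A ^+ (k - l) else 0).
Definition Sh : BM :=
  blkmx (fun k l : 'I_Nh => if (k == l.+1 :> nat) then (1%:M : M) else 0).

Lemma Fa_T (A B : M) : Fa Nh A B = Tm A *m kronI Nh B.
Proof.
rewrite mul_kronI /Fa; apply: eq_blkmx => k l.
by case: ifP; rewrite ?mul0mx.
Qed.

Lemma sum_shift (k : 'I_Nh) (G : nat -> M) :
  \sum_(j < Nh) (if (k == j.+1 :> nat) then (1%:M : M) else 0) *m G j
  = if (0 < k)%N then G k.-1 else 0.
Proof.
case: (posnP k) => [k0|kp].
  by rewrite big1 // => j _; rewrite k0 /= mul0mx.
have hk : (k.-1 < Nh)%N by rewrite (leq_ltn_trans (leq_pred k)).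
rewrite (bigD1 (Ordinal hk)) //= prednK // eqxx mul1mx big1 ?addr0 //.
move=> j; rewrite -val_eqE /= => hj.
case: eqP => [ek|_]; last by rewrite mul0mx.
by move: hj; rewrite ek /= eqxx.
Qed.

Lemma Sh_T (A : M) :
  Sh *m Tm A = blkmx (fun k l : 'I_Nh => if (l < k)%N then A ^+ (k - l).-1 else 0).
Proof.
rewrite blkmx_mul; apply: eq_blkmx => k l.
rewrite (sum_shift k (fun n => if (l <= n)%N then A ^+ (n - l) else 0)).
case: (posnP k) => [->|kp] //=.
have -> : (l <= k.-1)%N = (l < k)%N by rewrite -ltnS prednK.
by case: ifP => // _; congr (A ^+ _); rewrite -!subn1 subnAC.
Qed.

Lemma T_eq (A : M) : Tm A = 1%:M + kronI Nh A *m (Sh *m Tm A).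
Proof.
rewrite Sh_T kronI_mul -kronI1 /kronI blkmxD; apply: eq_blkmx => k l.
case: (ltngtP k l) => [kl|lk|/val_inj ->].
  have -> : (k == l) = false by apply/eqP => e; move: kl; rewrite e ltnn.
  by rewrite mulmx0 addr0.
- have -> : (k == l) = false by apply/eqP => e; move: lk; rewrite e ltnn.
  rewrite add0r.
  by rewrite mulmxE -exprS prednK // subn_gt0.
- by rewrite subnn expr0 mulmx0 eqxx addr0.
Qed.

Lemma T_inv (A : M) : (1%:M - kronI Nh A *m Sh) *m Tm A = 1%:M.
Proof.
rewrite mulmxBl mul1mx {1}T_eq -mulmxA; exact: addrK.
Qed.


Lemma inv_from (P V : BM) : V *m P = 1%:M -> invmx P = V.
Proof.
move=> h; have [_ u] := mulmx1_unit h.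
by rewrite -[LHS]mul1mx -h -mulmxA mulmxV // mulmx1.
Qed.

Definition Wm (A : M) : BM := 1%:M - kronI Nh A *m Sh.

Lemma kappa_formula (A B C CJ L dA K : M) : B \in unitmx -> CJ \in unitmx ->
  kappa_inv Nh A B C CJ L dA K =
    (kronI Nh C *m F_ea Nh A B C L *m kronI Nh (invmx B))
      *m Wm (Ax A B C K) *m kronI Nh (invmx CJ)
    + kronI Nh C *m F_ex Nh A C L dA *m kronI Nh (invmx CJ).
Proof.
move=> uB uCJ.
set T := Tm (Ax A B C K); set W := Wm (Ax A B C K).
have WT : W *m T = 1%:M by apply: T_inv.
have TW : T *m W = 1%:M by apply: mulmx1C.
have Fxa : F_xa Nh A B C K = T *m kronI Nh B by rewrite /F_xa Fa_T.
have BB : kronI Nh B *m kronI Nh (invmx B) = 1%:M by rewrite kronI_mulmx mulmxV // kronI1.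
have iFp : invmx (F_p Nh A B C CJ K)
    = kronI Nh (invmx B) *m W *m kronI Nh (invmx CJ).
  apply: inv_from; rewrite /F_p Fxa.
  rewrite -!mulmxA (mulmxA (kronI Nh (invmx CJ))) kronI_mulmx mulVmx // kronI1 mul1mx.
  by rewrite !mulmxA -(mulmxA _ W) WT mulmx1 kronI_mulmx mulVmx // kronI1.
rewrite /kappa_inv /F_r iFp Fxa mulmxDr mulmxDl; congr (_ + _).
  by rewrite !mulmxA.
have -> : kronI Nh C *m (F_ex Nh A C L dA *m (T *m kronI Nh B))
     *m (kronI Nh (invmx B) *m W *m kronI Nh (invmx CJ))
   = kronI Nh C *m F_ex Nh A C L dA *m (T *m (kronI Nh B *m kronI Nh (invmx B)) *m W)
     *m kronI Nh (invmx CJ) by rewrite !mulmxA.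
by rewrite BB mulmx1 TW mulmx1.
Qed.

Lemma Ax_comb (A B C X Y : M) (t : R) :
  Ax A B C (t *: X + (1 - t) *: Y) = t *: Ax A B C X + (1 - t) *: Ax A B C Y.
Proof.
rewrite /Ax mulmxDr mulmxDl -!scalemxAr -!scalemxAl !scalerDr.
rewrite addrACA -scalerDl [t + _]addrC subrK scale1r.
by [].
Qed.


Lemma one_comb (U : BM) (t : R) : U = t *: U + (1 - t) *: U.
Proof. by rewrite -scalerDl [t + _]addrC subrK scale1r. Qed.

Lemma Wm_comb (A1 A2 : M) (t : R) :
  Wm (t *: A1 + (1 - t) *: A2) = t *: Wm A1 + (1 - t) *: Wm A2.
Proof.
rewrite /Wm kronID !kronIZ mulmxDl -!scalemxAl !scalerBr.
rewrite addrACA -opprD -one_comb.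
by [].
Qed.

Lemma aff_comb (E1 E2 E3 W1 W2 : BM) (t : R) :
  E1 *m (t *: W1 + (1 - t) *: W2) *m E2 + E3
  = t *: (E1 *m W1 *m E2 + E3) + (1 - t) *: (E1 *m W2 *m E2 + E3).
Proof.
rewrite mulmxDr mulmxDl -!scalemxAr -!scalemxAl !scalerDr addrACA -one_comb.
by [].
Qed.

Lemma kappa_comb (A B C CJ L dA X Y : M) (t : R) : B \in unitmx -> CJ \in unitmx ->
  kappa_inv Nh A B C CJ L dA (t *: X + (1 - t) *: Y)
  = t *: kappa_inv Nh A B C CJ L dA X + (1 - t) *: kappa_inv Nh A B C CJ L dA Y.
Proof.
move=> uB uCJ; rewrite !kappa_formula // Ax_comb Wm_comb.
exact: aff_comb.
Qed.

End Blk.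

Lemma frobE (R : rcfType) m n (M : 'M[R]_(m, n)) :
  frob M ^+ 2 = \sum_(i < m) \sum_(j < n) M i j ^+ 2.
Proof.
rewrite /frob sqr_sqrtr // sumr_ge0 // => i _; rewrite sumr_ge0 // => j _.
exact: sqr_ge0.
Qed.

Lemma final_arith (R : realFieldType) (eta t fX fY fD fZ GX GY GZ : R) :
  fZ = t * fX + (1 - t) * fY - t * (1 - t) * fD ->
  GZ <= t * GX + (1 - t) * GY ->
  eta * fZ + GZ <= t * (eta * fX + GX) + (1 - t) * (eta * fY + GY)
                   - eta * 2%:R / 2%:R * t * (1 - t) * fD.
Proof.
move=> -> HG.
have e2 : eta * 2%:R / 2%:R = eta by rewrite mulfK // pnatr_eq0.
rewrite e2 -subr_ge0.
have -> : t * (eta * fX + GX) + (1 - t) * (eta * fY + GY) - eta * t * (1 - t) * fD -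
    (eta * (t * fX + (1 - t) * fY - t * (1 - t) * fD) + GZ)
    = t * GX + (1 - t) * GY - GZ by ring.
by rewrite subr_ge0.
Qed.

Unset Implicit Arguments.

Theorem theorem2 (R : rcfType) (nx Nh : nat) (eta : R)
    (Aj B C CJ L dA : 'M[R]_nx) :
  (0 < nx)%N -> (0 < Nh)%N -> 0 < eta ->
  B \in unitmx -> C \in unitmx -> CJ \in unitmx ->
  strongly_convex (fun K : 'M[R]_nx => qbar Nh eta Aj B C CJ L dA K).
Proof.
move=> nx0 Nh0 eta0 uB uC uCJ.
exists (eta * 2%:R); split; first by rewrite mulr_gt0.
move=> X Y t t0 t1.
have n0 : (0 < bdim nx Nh)%N by rewrite /bdim sum_nat_const card_ord muln_gt0 Nh0.
rewrite /qbar kappa_comb //.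
have HG := G_conv (kappa_inv Nh Aj B C CJ L dA X) (kappa_inv Nh Aj B C CJ L dA Y) n0 t0 t1.
have FZ : frob (t *: X + (1 - t) *: Y) ^+ 2
    = t * frob X ^+ 2 + (1 - t) * frob Y ^+ 2 - t * (1 - t) * frob (X - Y) ^+ 2.
  rewrite !frobE !mulr_sumr -big_split -sumrB /=; apply: eq_bigr => i _.
  rewrite !mulr_sumr -big_split -sumrB /=; apply: eq_bigr => j _.
  rewrite !mxE; ring.

exact: (@final_arith _ eta t _ _ _ _ _ _ _ FZ HG).
Qed.
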